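(* For $n\ge 0$, let $T_n$ be the poset consisting of a chain $a_1<a_2<\dots<a_n$, two incomparable elements $b,c$ with $a_n<b$ and $a_n<c$, and a chain $e_1<\dots<e_n$ with $b<e_1$ and $c<e_1$ (when $n=0$, $T_0$ is a two-element antichain), and let $R_n=J(T_n)$ be its lattice of order ideals (a lattice with $2n+4$ elements, the minuscule ''double tailed diamond'' lattice). Then \[ \d(R_n)=\frac{2}{3}(n+3)\left(4n^2+9n+8\right). \]
   Context: $J(P)$ is the lattice of order ideals of a finite poset $P$ ordered by inclusion. For a finite poset $Q$, $\d(Q)=\sum_{(p,q)\in Q\times Q}\d(p,q)$, where $\d(p,q)$ is the graph distance in the Hasse diagram of $Q$ (edges = cover relations) and the sum runs over ordered pairs. *)

(* Defs.v *)
From mathcomp Require Import all_boot all_order all_algebra.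
Set Implicit Arguments. Unset Strict Implicit. Unset Printing Implicit Defensive.

Section GraphDist.
Variables (V : finType) (adj : rel V).

Fixpoint ball (k : nat) (u : V) : {set V} :=
  if k is k'.+1 then
    ball k' u :|: [set y | [exists x in ball k' u, adj x y]]
  else [set u].

(* graph distance: least k such that v is within k steps of u
   (meaningful for connected graphs, where it is < #|V|) *)
Definition gdist (u v : V) : nat := find (fun k => v \in ball k u) (iota 0 #|V|).

Definition dsum : nat := \sum_(p : V) \sum_(q : V) gdist p q.
End GraphDist.

Section Ideals.
Variables (T : finType) (le : rel T).

Definition is_ideal (I : {set T}) : bool :=
  [forall x, forall y, (y \in I) && le x y ==> (x \in I)].

Definition J := {I : {set T} | is_ideal I}.

Definition Jcover (I K : J) : bool :=
  (val I \proper val K) &&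
  ~~ [exists L : J, (val I \proper val L) && (val L \proper val K)].

Definition Jhasse : rel J := fun I K => Jcover I K || Jcover K I.

Definition dJ : nat := dsum Jhasse.
End Ideals.

(* Elements of T_n are 'I_(2n+2): i < n is a_(i+1); n is b; n+1 is c;
   n+2+j (j < n) is e_(j+1). *)
Definition Tn_rank (n : nat) (x : 'I_(2 * n + 2)) : nat :=
  if x < n then x : nat
  else if x <= n.+1 then n
  else x.-1.

Definition Tn_le (n : nat) : rel 'I_(2 * n + 2) :=
  fun x y => (x == y) || (Tn_rank x < Tn_rank y).

Definition dRn (n : nat) : nat := dJ (@Tn_le n).

(* Main.v *)
Require Import Defs.
From mathcomp Require Import all_boot all_order all_algebra zify ring lra.
Section Gen.
Variables (T : finType) (le : rel T) (rk : T -> nat).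
Hypothesis Hrk : forall x y, le x y -> x != y -> rk x < rk y.

Definition D (I K : {set T}) := #|I :\: K| + #|K :\: I|.

Lemma idealP (I : {set T}) :
  reflect (forall x y, y \in I -> le x y -> x \in I) (is_ideal le I).
Proof.
apply: (iffP forallP) => [H x y Hy Hl | H x].
  by have /forallP/(_ y) := H x; rewrite Hy Hl.
by apply/forallP => y; apply/implyP => /andP [Hy Hl]; apply: H Hl.
Qed.

Lemma exists_max (S : {set T}) : S != set0 ->
  exists2 y, y \in S & forall w, w \in S -> le y w -> w = y.
Proof.
case/set0Pn => y0 Hy0.
case: (arg_maxnP rk Hy0) => y Hy Hmax.
exists y => // w Hw Hle; apply/eqP; apply: contraT => Hne.
have := Hrk _ _ Hle; rewrite eq_sym Hne => /(_ isT).
by have := Hmax w Hw; lia.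
Qed.

Lemma exists_min (S : {set T}) : S != set0 ->
  exists2 y, y \in S & forall w, w \in S -> le w y -> w = y.
Proof.
case/set0Pn => y0 Hy0.
case: (arg_minnP rk Hy0) => y Hy Hmin.
exists y => // w Hw Hle; apply/eqP; apply: contraT => Hne.
have := Hrk _ _ Hle; rewrite Hne => /(_ isT).
by have := Hmin w Hw; lia.
Qed.

Lemma cover_iff (I K : J le) :
  Jcover I K = (val I \subset val K) && (#|val K| == (#|val I|).+1).
Proof.
apply/idP/idP.
- case/andP => Hpr Hno.
  have Hsub := proper_sub Hpr; rewrite Hsub /=.
  have Hlt := proper_card Hpr.
  rewrite eqn_leq Hlt andbT.
  apply: contraR Hno => Hgt.
  have Hne : val K :\: val I != set0.
    by rewrite setD_eq0; case/properP: Hpr => _ [x Hx Hnx];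
      apply/negP => /subsetP /(_ x Hx); rewrite (negbTE Hnx).
  case: (exists_min _ Hne) => y; rewrite inE => /andP [HyI HyK] Hmin.
  have HL : is_ideal le (y |: val I).
    apply/idealP => x z; rewrite !inE => /orP [/eqP -> | Hz] Hl.
    + case HxI: (x \in val I); first by rewrite orbT.
      have HxK : x \in val K by apply: (idealP _ (valP K)) Hl.
      by rewrite (Hmin x) ?eqxx // inE HxI HxK.
    + by rewrite (idealP _ (valP I) x z Hz Hl) orbT.
  apply/existsP; exists (exist (fun I => is_true (is_ideal le I)) _ HL) => /=.
  rewrite !properEcard cardsU1 HyI /= subsetUr /=.
  apply/andP; split; first lia.
  rewrite subUset sub1set HyK Hsub /=; lia.
- case/andP => Hsub /eqP Hc; apply/andP; split.
    by rewrite properEcard Hsub Hc /=.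
  apply/negP => /existsP [L /andP [H1 H2]].
  by have := proper_card H1; have := proper_card H2; lia.
Qed.

Lemma Dsub (A B : {set T}) : A \subset B -> D A B = #|B| - #|A|.
Proof.
move=> H; rewrite /D.
have /eqP -> : A :\: B == set0 by rewrite setD_eq0.
by rewrite cards0 cardsD (setIidPr H).
Qed.

Lemma DC A B : D A B = D B A.
Proof. by rewrite /D addnC. Qed.

Lemma Dtri (A B C : {set T}) : D A C <= D A B + D B C.
Proof.
rewrite /D.
have H1 : #|A :\: C| <= #|A :\: B| + #|B :\: C|.
  apply: leq_trans (leq_card_setU _ _).
  apply: subset_leq_card; apply/subsetP => x; rewrite !inE.
  by case: (x \in A); case: (x \in B); case: (x \in C).
have H2 : #|C :\: A| <= #|C :\: B| + #|B :\: A|.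
  apply: leq_trans (leq_card_setU _ _).
  apply: subset_leq_card; apply/subsetP => x; rewrite !inE.
  by case: (x \in A); case: (x \in B); case: (x \in C).
lia.
Qed.

Lemma D0 (I K : J le) : D (val I) (val K) = 0 -> I = K.
Proof.
rewrite /D => H; apply: val_inj; apply/eqP; rewrite eqEsubset -!setD_eq0.
by rewrite -!cards_eq0; apply/andP; split; apply/eqP; move: H; lia.
Qed.

Lemma Dle A B : D A B <= #|T|.
Proof.
rewrite /D -(cardsC (B :\: A)) [X in _ <= X]addnC leq_add2r; apply: subset_leq_card.
by apply/subsetP => x; rewrite !inE; case: (x \in A); case: (x \in B).
Qed.

Lemma hasse_D (I K : J le) : Jhasse I K -> D (val I) (val K) = 1.
Proof.
rewrite /Jhasse !cover_iff => /orP [] /andP [Hs /eqP Hc].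
  by rewrite Dsub // Hc subSn // subnn.
by rewrite DC Dsub // Hc subSn // subnn.
Qed.

Lemma ballE k (u : J le) :
  ball (@Jhasse _ le) k u = [set v | D (sval u) (sval v) <= k].
Proof.
elim: k u => [|k IH] u /=.
  apply/setP => v; rewrite !inE; apply/eqP/idP => [-> | H].
    by rewrite /D setDv cards0.
  by apply/esym/D0; apply/eqP; rewrite -leqn0.
rewrite IH; apply/setP => v; rewrite !inE; apply/idP/idP.
  case/orP => [H | /existsP [x /andP [Hx Hadj]]]; first exact: leqW.
  rewrite inE in Hx; have := Dtri (sval u) (sval x) (sval v).
  rewrite (hasse_D _ _ Hadj); move: Hx => H1 H2; apply: leq_trans H2 _; rewrite addn1 ltnS; exact: H1.
move=> H; case: (leqP (D (sval u) (sval v)) k) => Hk.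
  by [].
have HD : D (sval u) (sval v) = k.+1 by apply/anti_leq/andP; split; [exact: H | exact: Hk].
apply/orP; right; apply/existsP.
case Hvu: (sval v :\: sval u == set0).
- have Huv : sval u :\: sval v != set0.
    apply/negP => /eqP E; move: HD; rewrite /D E (eqP Hvu) cards0; lia.
  case: (exists_min _ Huv) => y; rewrite inE => /andP [Hyv Hyu] Hmin.
  have HL : is_ideal le (y |: sval v).
    apply/idealP => x z; rewrite !inE => /orP [/eqP -> | Hz] Hl.
    + case Hxv: (x \in sval v); first by rewrite orbT.
      have Hxu : x \in sval u by apply: (idealP _ (valP u)) Hl.
      by rewrite (Hmin x) ?eqxx // inE Hxv Hxu.
    + by rewrite (idealP _ (valP v) x z Hz Hl) orbT.
  exists (exist (fun I => is_true (is_ideal le I)) _ HL); apply/andP; split.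
  + rewrite inE; apply: eq_leq; rewrite /= /D.
    have -> : sval u :\: (y |: sval v) = (sval u :\: sval v) :\ y.
      by apply/setP => z; rewrite !inE; case: (z == y); case: (z \in sval v).
    have -> : (y |: sval v) :\: sval u = sval v :\: sval u.
      apply/setP => z; rewrite !inE; case: (eqVneq z y) => [-> |] //=.
      by case: (y \in sval v) Hyv; rewrite /= ?Hyu.
    move: HD; rewrite /D (cardsD1 y (sval u :\: sval v)) !inE Hyv Hyu /=; lia.
  + rewrite /Jhasse !cover_iff /= subsetUr cardsU1 Hyv /=.
    by rewrite eqxx orbT.
- have Hne : sval v :\: sval u != set0 by rewrite Hvu.
  case: (exists_max _ Hne) => y; rewrite inE => /andP [Hyu Hyv] Hmax.
  have HL : is_ideal le (sval v :\ y).
    apply/idealP => x z; rewrite !inE => /andP [Hzy Hz] Hl.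
    have Hxv : x \in sval v by apply: (idealP _ (valP v)) Hl.
    rewrite Hxv andbT; apply/eqP => Exy; subst x.
    have Hzu : z \notin sval u.
      by apply/negP => Hzu; rewrite (idealP _ (valP u) y z Hzu Hl) in Hyu.
    by move/eqP: Hzy; apply; apply: Hmax => //; rewrite inE Hzu Hz.
  exists (exist (fun I => is_true (is_ideal le I)) _ HL); apply/andP; split.
  + rewrite inE; apply: eq_leq; rewrite /= /D.
    have -> : sval u :\: (sval v :\ y) = sval u :\: sval v.
      apply/setP => z; rewrite !inE; case: (eqVneq z y) => [-> |] //=.
      by rewrite (negbTE Hyu) andbF.
    have -> : (sval v :\ y) :\: sval u = (sval v :\: sval u) :\ y.
      by apply/setP => z; rewrite !inE andbCA.
    move: HD; rewrite /D (cardsD1 y (sval v :\: sval u)) !inE Hyv Hyu /=; lia.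
  + rewrite /Jhasse !cover_iff /= subD1set.
    by rewrite (cardsD1 y (sval v)) Hyv eqxx.
Qed.

Lemma find_le d N : d < N -> find (fun k => d <= k) (iota 0 N) = d.
Proof.
move=> H; rewrite -(subnKC (ltnW H)) iotaD find_cat.
have -> : has (fun k => d <= k) (iota 0 d) = false.
  apply/negbTE/hasPn => k; rewrite mem_iota => /andP [_ Hk]; lia.
rewrite size_iota add0n.
have -> : N - d = (N - d).-1.+1 by lia.
by rewrite /= leqnn addn0.
Qed.

Lemma dsumE : #|T| < #|{: J le}| ->
  dJ le = \sum_(I : J le) \sum_(K : J le) D (val I) (val K).
Proof.
move=> HT; rewrite /dJ /dsum; apply: eq_bigr => I _; apply: eq_bigr => K _.
rewrite /gdist.
rewrite (eq_find (a2 := fun k => D (val I) (val K) <= k)); last first.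
  by move=> k; rewrite ballE inE.
by apply: find_le; apply: leq_ltn_trans (Dle _ _) HT.
Qed.
End Gen.
Arguments D {T}.
Arguments Dsub {T A B}.
Arguments DC {T}.
Arguments dsumE {T le rk}.
Section Tn.
Variable n : nat.
Notation N := (2 * n + 2).
Notation TT := ('I_(2 * n + 2)).

Lemma rank_lt (x y : TT) : Tn_rank x < Tn_rank y -> x < y.
Proof. by rewrite /Tn_rank; repeat case: ifP; lia. Qed.

Lemma rank_mono (x y : TT) : x <= y -> Tn_rank x <= Tn_rank y.
Proof. by rewrite /Tn_rank; repeat case: ifP; lia. Qed.

Lemma rank_eq (x y : TT) : x < y -> Tn_rank x = Tn_rank y ->
  (x : nat) = n /\ (y : nat) = n.+1.
Proof. by rewrite /Tn_rank; repeat case: ifP; lia. Qed.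

Lemma Hrk (x y : TT) : Tn_le x y -> x != y -> Tn_rank x < Tn_rank y.
Proof. by rewrite /Tn_le => /orP [/eqP -> | //]; rewrite eqxx. Qed.

Definition Pk (k : nat) : {set TT} := [set x : TT | x < k].
Definition Qs : {set TT} := [set x : TT | (x < n) || ((x : nat) == n.+1)].

Lemma Pk_ideal k : is_ideal (@Tn_le n) (Pk k).
Proof.
apply/idealP => x y; rewrite !inE /Tn_le => Hy /orP [/eqP -> | Hr] //.
by have := rank_lt _ _ Hr; lia.
Qed.

Lemma Qs_ideal : is_ideal (@Tn_le n) Qs.
Proof.
apply/idealP => x y; rewrite !inE /Tn_le => Hy /orP [/eqP -> | Hr] //.
have := rank_lt _ _ Hr; move: Hr Hy; rewrite /Tn_rank.
by repeat case: ifP; lia.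
Qed.

Lemma ideal_char (I : {set TT}) : is_ideal (@Tn_le n) I ->
  (exists2 k, k <= N & I = Pk k) \/ I = Qs.
Proof.
move=> HI.
pose p j := [forall x : TT, ((x : nat) == j) ==> (x \notin I)].
have exP : exists j, p j.
  by exists N; apply/forallP => x; apply/implyP => /eqP E; have := ltn_ord x; lia.
case: (ex_minnP exP) => k Hpk Hmin.
have HkN : k <= N by apply: Hmin; apply/forallP => x; apply/implyP => /eqP E;
  have := ltn_ord x; lia.
have Hlow : forall x : TT, x < k -> x \in I.
  move=> x Hx; apply: contraT => Hnx.
  have : p x by apply/forallP => z; apply/implyP => /eqP E;
    by rewrite (val_inj E).
  by move/Hmin; lia.
have Hhigh : forall x : TT, x \in I -> k <= x -> (x : nat) = n.+1 /\ k = n.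
  move=> x Hx Hkx.
  have Hk : k < N by have := ltn_ord x; lia.
  have Hk' : Ordinal Hk \notin I by have /forallP /(_ (Ordinal Hk)) := Hpk; rewrite /= eqxx.
  have Hr : ~~ (Tn_rank (Ordinal Hk) < Tn_rank x).
    apply/negP => Hr; move: Hk'; rewrite (elimT (idealP _ _ _) HI (Ordinal Hk) x Hx) //.
    by rewrite /Tn_le Hr orbT.
  have Hr2 := rank_mono (Ordinal Hk) x Hkx.
  have Hne : k != x by apply/eqP => E; move: Hk'; rewrite (_ : Ordinal Hk = x) ?Hx //; apply: val_inj.
  have [] := rank_eq (Ordinal Hk) x ltac:(rewrite /=; lia) ltac:(lia).
  by move=> /= -> ->.
have Hn1 : n.+1 < N by lia.
case E: ((k == n) && (Ordinal Hn1 \in I)).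
- right; case/andP: E => /eqP Hkn Hin.
  apply/setP => z; rewrite inE; apply/idP/idP.
  + move=> Hz; case: (ltnP z k) => Hzk; first by rewrite Hkn in Hzk; rewrite Hzk.
    by have [-> _] := Hhigh z Hz Hzk; rewrite eqxx orbT.
  + case/orP => [Hz | /eqP Hz]; first by apply: Hlow; lia.
    by rewrite (_ : z = Ordinal Hn1) //; apply: val_inj.
- left; exists k => //; apply/setP => z; rewrite inE; apply/idP/idP.
  + move=> Hz; case: (ltnP z k) => // Hzk.
    have [Hz1 Hkn] := Hhigh z Hz Hzk.
    move: E; rewrite Hkn eqxx /= (_ : Ordinal Hn1 = z) ?Hz //; apply: val_inj => //.
  + exact: Hlow.
Qed.

Lemma card_Pk k : k <= N -> #|Pk k| = k.
Proof.
move=> Hk; induction k as [|k IH].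
  apply/eqP; rewrite cards_eq0; apply/eqP/setP => z; rewrite !inE; lia.
have Hk' : k < N by lia.
have -> : Pk k.+1 = Ordinal Hk' |: Pk k.
  by apply/setP => z; rewrite !inE -val_eqE /=; lia.
by rewrite cardsU1 inE /= ltnn IH //; lia.
Qed.

Lemma Hn1 : n.+1 < N. Proof. lia. Qed.
Lemma Hn0 : n < N. Proof. lia. Qed.

Lemma card_Qs : #|Qs| = n.+1.
Proof.
have -> : Qs = Ordinal Hn1 |: Pk n.
  by apply/setP => z; rewrite !inE -val_eqE /=; lia.
by rewrite cardsU1 inE /= card_Pk; lia.
Qed.

Lemma DPP a b : a <= N -> b <= N -> D (Pk a) (Pk b) = (a - b) + (b - a).
Proof.
move=> Ha Hb; case: (leqP a b) => Hab.
  rewrite Dsub ?card_Pk //; first lia.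
  by apply/subsetP => z; rewrite !inE; lia.
rewrite DC Dsub ?card_Pk //; first lia.
by apply/subsetP => z; rewrite !inE; lia.
Qed.

Lemma DQP a : a <= N ->
  D Qs (Pk a) = (a - n.+1) + (n.+1 - a) + 2 * (a == n.+1).
Proof.
move=> Ha; case: (ltngtP a n.+1) => Han.
- rewrite DC Dsub ?card_Pk ?card_Qs //; first lia.
  by apply/subsetP => z; rewrite !inE; lia.
- rewrite Dsub ?card_Pk ?card_Qs //; first lia.
  by apply/subsetP => z; rewrite !inE; lia.
- subst a; rewrite /D.
  have -> : Qs :\: Pk n.+1 = [set Ordinal Hn1].
    by apply/setP => z; rewrite !inE -val_eqE /=; lia.
  have -> : Pk n.+1 :\: Qs = [set Ordinal Hn0].
    by apply/setP => z; rewrite !inE -val_eqE /=; lia.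
  by rewrite !cards1; lia.
Qed.

Definition JT := J (@Tn_le n).

Definition g (i : 'I_N.+2) : JT :=
  if i < N.+1 then exist (fun I => is_true (is_ideal (@Tn_le n) I)) _ (Pk_ideal i)
  else exist (fun I => is_true (is_ideal (@Tn_le n) I)) _ Qs_ideal.

Definition h (I : JT) : 'I_N.+2 :=
  if val I == Qs then ord_max else inord #|val I|.

Lemma Pk_Qs k : Pk k != Qs.
Proof.
apply/negP => /eqP E.
have : Ordinal Hn1 \in Qs by rewrite inE /= eqxx orbT.
rewrite -E inE /= => H.
have : Ordinal Hn0 \in Pk k by rewrite inE /=; lia.
by rewrite E inE /= ltnn; lia.
Qed.

Lemma gK : cancel g h.
Proof.
move=> i; rewrite /g; case: ifP => Hi; rewrite /h /=.
  rewrite (negbTE (Pk_Qs _)) card_Pk; last by lia.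
  by apply: val_inj; rewrite /= inordK.
rewrite eqxx; apply: val_inj => /=; have := ltn_ord i; lia.
Qed.

Lemma hK : cancel h g.
Proof.
move=> I; rewrite /h; case: ifP => HQ; rewrite /g.
  by rewrite /= ltnn; apply: val_inj => /=; apply/esym/eqP.
case: (ideal_char _ (valP I)) => [[k Hk E] | E]; last by rewrite E eqxx in HQ.
rewrite E card_Pk // inordK; last by lia.
have -> : (k < N.+1) = true by apply/idP; lia.
by apply: val_inj; rewrite /= E.
Qed.

Lemma g_bij : bijective g.
Proof. exact: Bijective gK hK. Qed.

Lemma gW (i : 'I_N.+1) : val (g (widen_ord (leqnSn _) i)) = Pk i.
Proof. by rewrite /g /= ltn_ord. Qed.

Lemma gM : val (g ord_max) = Qs.
Proof. by rewrite /g /= ltnn. Qed.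

Lemma dRn_sum : dRn n =
  \sum_(i < N.+1) \sum_(j < N.+1) ((i - j) + (j - i))
  + 2 * \sum_(a < N.+1) ((a - n.+1) + (n.+1 - a) + 2 * ((a : nat) == n.+1)).
Proof.
rewrite /dRn (dsumE Hrk); last first.
  by rewrite -(bij_eq_card g_bij) !card_ord; lia.
rewrite (reindex g (onW_bij _ g_bij)) /=.
rewrite (eq_bigr (fun i => \sum_(j < N.+2) D (val (g i)) (val (g j)))); last first.
  by move=> i _; rewrite (reindex g (onW_bij _ g_bij)).
under eq_bigr => i _ do rewrite big_ord_recr.
rewrite big_ord_recr big_split.
set A := \sum_(i < N.+1) \sum_(j < N.+1) ((i - j) + (j - i)).
set B := \sum_(a < N.+1) ((a - n.+1) + (n.+1 - a) + 2 * ((a : nat) == n.+1)).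
have E1 : \sum_(i < N.+1) \sum_(j < N.+1)
    D (val (g (widen_ord (leqnSn _) i))) (val (g (widen_ord (leqnSn _) j))) = A.
  by apply: eq_bigr => i _; apply: eq_bigr => j _; rewrite !gW DPP //; rewrite -ltnS; exact: ltn_ord.
have E2 : \sum_(i < N.+1)
    D (val (g (widen_ord (leqnSn _) i))) (val (g ord_max)) = B.
  by apply: eq_bigr => i _; rewrite gW gM DC DQP //; rewrite -ltnS; exact: ltn_ord.
have E3 : \sum_(j < N.+1)
    D (val (g ord_max)) (val (g (widen_ord (leqnSn _) j))) = B.
  by apply: eq_bigr => j _; rewrite gW gM DQP //; rewrite -ltnS; exact: ltn_ord.
have E4 : D (val (g ord_max)) (val (g ord_max)) = 0.
  by rewrite /D setDv cards0.
rewrite E1 E2 E3 E4; change (A + B + (B + 0) = A + 2 * B); lia.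
Qed.
End Tn.
Lemma T2 M : 2 * \sum_(i < M) ((i - M) + (M - i)) = M * M.+1.
Proof.
elim: M => [|M IH]; first by rewrite big_ord0.
rewrite big_ord_recl /=.
rewrite (eq_bigr (fun i : 'I_M => (i - M) + (M - i))); last first.
  by move=> i _; rewrite /bump /=; lia.
rewrite mulnDr IH; nia.
Qed.

Lemma S3 M : 3 * \sum_(i < M) \sum_(j < M) ((i - j) + (j - i)) = M.-1 * M * M.+1.
Proof.
elim: M => [|M IH]; first by rewrite big_ord0.
under eq_bigr => i _ do rewrite big_ord_recr /=.
rewrite big_ord_recr /= big_split /=.
have := T2 M.
have -> : \sum_(j < M) ((M - j) + (j - M)) = \sum_(j < M) ((j - M) + (M - j)).
  by apply: eq_bigr => j _; rewrite addnC.
rewrite subnn.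
move: IH; case: M => [|M]; rewrite ?big_ord0 /=; nia.
Qed.

Lemma E2 c : \sum_(a < (2 * c).+1) ((a - c) + (c - a) + 2 * ((a : nat) == c)) = c * c.+1 + 2.
Proof.
elim: c => [|c IH]; first by rewrite big_ord1.
have -> : (2 * c.+1).+1 = ((2 * c).+1).+2 by lia.
rewrite big_ord_recl /=.
rewrite (eq_bigr (fun i : 'I_(2 * c).+2 => (i - c) + (c - i) + 2 * ((i : nat) == c))); last first.
  by move=> i _; rewrite /bump /= add1n !subSS eqSS.
rewrite big_ord_recr /= IH.
have -> : ((2 * c).+1 == c) = false by apply/negbTE; lia.
lia.
Qed.

Import GRing.Theory.
Local Open Scope ring_scope.

Theorem theorem1p8 (n : nat) :
  (dRn n)%:R = (2%:R / 3%:R) * (n.+3)%:R * (4 * n ^ 2 + 9 * n + 8)%:R :> rat.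
Proof.
have H : (3 * dRn n = 2 * n.+3 * (4 * n ^ 2 + 9 * n + 8))%N.
  rewrite dRn_sum.
  have -> : (2 * n + 2)%N = (2 * n.+1)%N by lia.
  rewrite E2 mulnDr S3 /=; nia.
have H3 : (3%:R : rat) != 0 by [].
apply: (mulfI H3); rewrite -natrM H.
rewrite !natrM !natrD !natrM ?natrX.
field; by [].
Qed.
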